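(* For all $0\leq i\leq k$, $$f_{k,i}(x)=(1+x)^{\binom{i}{2}}\prod_{\ell=i+1}^{k}\bigl((1+x)^{\ell}-1\bigr).$$
   Context: An inversion sequence of length $n$ is $e=e_1\ldots e_n$ with $0\le e_i<i$. $\mathrm{asc}(e_1\ldots e_i)=|\{\ell\in[i-1]:e_\ell<e_{\ell+1}\}|$. An ascent sequence is an inversion sequence with $e_{i+1}\le \mathrm{asc}(e_1\ldots e_i)+1$ for all $i$; it is primitive if $e_i\ne e_{i+1}$ for all $i$. Let $\mathcal{PA}$ be the set of primitive ascent sequences of all lengths $\geq1$. For primitive $e$, partition $e$ into maximal strictly decreasing consecutive blocks (runs); an entry is a tail if it is the last (smallest) entry of its run. Define $\mathrm{wt}(e)=\prod_{i=1}^{\mathrm{len}(e)}\mathrm{wt}(e_i)$ with $\mathrm{wt}(e_i)=1$ if $e_i$ is a tail and $\mathrm{wt}(e_i)=x$ otherwise. A sequence avoids $\underline{12}0$ if there are no indices $2\le i<j$ with $e_j<e_{i-1}<e_i$. Let $\mathcal{PA}_{k,i}(\underline{12}0)$ be the set of $\underline{12}0$-avoiding $e\in\mathcal{PA}$ with $\mathrm{asc}(e)=k$ and last entry equal to $i$, and $f_{k,i}(x)=\sum_{e\in\mathcal{PA}_{k,i}(\underline{12}0)}\mathrm{wt}(e)$. *)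

(* Defs.v *)
From mathcomp Require Import all_boot all_order all_algebra.
Set Implicit Arguments. Unset Strict Implicit. Unset Printing Implicit Defensive.
Import GRing.Theory.

(* Sequences e = e_1 ... e_n are represented as (seq nat), 0-indexed:
   e_{t+1} = nth 0 e t. *)

Fixpoint asc (s : seq nat) : nat :=
  match s with
  | x :: ((y :: _) as r) => (x < y) + asc r
  | _ => 0
  end.

Definition is_inversion (e : seq nat) : Prop :=
  forall t, t < size e -> nth 0 e t < t.+1.

Definition is_ascent (e : seq nat) : Prop :=
  is_inversion e /\
  forall t, 0 < t < size e -> nth 0 e t <= asc (take t e) + 1.

Definition is_primitive (e : seq nat) : Prop :=
  forall t, t.+1 < size e -> nth 0 e t != nth 0 e t.+1.

(* avoids 1_2_0 (underlined 12): no 2 <= i < j (1-indexed) with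
   e_j < e_{i-1} < e_i.  0-indexed: no 1 <= a < b < size e with
   e[b] < e[a-1] < e[a]. *)
Definition avoids_120 (e : seq nat) : Prop :=
  forall a b, 0 < a -> a < b -> b < size e ->
    ~ (nth 0 e b < nth 0 e a.-1 < nth 0 e a).

(* An entry is a tail iff it is the last entry of its maximal strictly
   decreasing run, i.e. it is the last entry of e or the next entry is not
   smaller. *)
Definition is_tail (e : seq nat) (t : nat) : bool :=
  (t.+1 >= size e) || (nth 0 e t <= nth 0 e t.+1).

Definition nontails (e : seq nat) : nat :=
  count (fun t => ~~ is_tail e t) (iota 0 (size e)).

Definition wt (e : seq nat) : {poly int} := 'X ^+ nontails e.

Definition in_PA120 (k i : nat) (e : seq nat) : Prop :=
  0 < size e /\ is_ascent e /\ is_primitive e /\ avoids_120 e /\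
  asc e = k /\ last 0 e = i.

(* Main.v *)
Require Import Defs.
From mathcomp Require Import all_boot all_order all_algebra zify ring.
Import GRing.Theory.

Definition dgt : rel nat := fun x y => y < x.

Lemma asc_cons x s : asc (x :: s) = ((0 < size s) && (x < head 0 s)) + asc s.
Proof. by case: s. Qed.

Fixpoint des (s : seq nat) : nat :=
  match s with
  | x :: ((y :: _) as r) => (y < x) + des r
  | _ => 0
  end.

Lemma des_cons x s : des (x :: s) = ((0 < size s) && (head 0 s < x)) + des s.
Proof. by case: s. Qed.

Lemma asc_cat P r : P != [::] -> r != [::] ->
  asc (P ++ r) = asc P + (last 0 P < head 0 r) + asc r.
Proof.
elim: P => [//|x P IH] _ rn.
case: P IH => [|y P] IH.
  by rewrite cat_cons cat0s asc_cons; case: r rn {IH}.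
by rewrite cat_cons [LHS]asc_cons IH // [asc (x :: _)]asc_cons /= !addnA.
Qed.

Lemma des_cat P r : P != [::] -> r != [::] ->
  des (P ++ r) = des P + (head 0 r < last 0 P) + des r.
Proof.
elim: P => [//|x P IH] _ rn.
case: P IH => [|y P] IH.
  by rewrite cat_cons cat0s des_cons; case: r rn {IH}.
by rewrite cat_cons [LHS]des_cons IH // [des (x :: _)]des_cons /= !addnA.
Qed.

Lemma nontails_des e : nontails e = des e.
Proof.
elim: e => [//|x s IH].
rewrite des_cons -IH /nontails /= -[1]/(1 + 0) iotaDl count_map.
congr (_ + _).
  rewrite /is_tail /=; case: s {IH} => //= y s.
  by rewrite ltnNge.
Qed.

Lemma asc_le s : asc s <= (size s).-1.
Proof.
elim: s => [//|x s IH]; rewrite asc_cons /=.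
case: s IH => [//|y s] /= IH.
by rewrite -[(size s).+1]add1n; apply: leq_add => //; exact: leq_b1.
Qed.

Lemma dec_asc0 r : sorted dgt r -> asc r = 0.
Proof.
elim: r => [//|x r IH] H; rewrite asc_cons IH; last exact: path_sorted H.
case: r H {IH} => //= y r /andP[H _]; rewrite /dgt in H.
by rewrite ltnNge ltnW.
Qed.

Lemma dec_des r : sorted dgt r -> des r = (size r).-1.
Proof.
elim: r => [//|x r IH] H; rewrite des_cons IH; last exact: path_sorted H.
case: r H {IH} => //= y r /andP[H _]; rewrite /dgt in H.
by rewrite H.
Qed.

Lemma dec_last_head r : sorted dgt r -> last 0 r <= head 0 r.
Proof.
elim: r => [//|x r IH] /= H.
case: r H IH => //= y r /andP[H1 H2] IH.
exact: leq_trans (IH H2) (ltnW H1).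
Qed.

Lemma dec_nth r j : sorted dgt r -> j < size r ->
  last 0 r <= nth 0 r j <= head 0 r.
Proof.
move=> H jr.
have H' : sorted geq r by apply: sub_sorted H => x y /ltnW.
have gtr : transitive geq by move=> a b c /= h1 h2; exact: leq_trans h2 h1.
have := sorted_leq_nth gtr leqnn 0 H'.
move=> M.
have r0 : 0 < size r by apply: leq_ltn_trans jr.
apply/andP; split.
  rewrite (last_nth 0); case: r H H' M jr r0 => //= x r _ _ M jr _.
  have := M j (size r); rewrite !inE /= => ->//; by rewrite -ltnS.
rewrite -nth0; apply: M; rewrite ?inE //.
Qed.

Lemma dec_prim_asc0 r : sorted (fun x y => x != y) r -> asc r = 0 -> sorted dgt r.
Proof.
elim: r => [//|x r IH] H; rewrite asc_cons.
case: r H IH => //= y r /andP[H1 H2] IH.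
case: ltnP => //= yx A; rewrite /dgt ltn_neqAle yx eq_sym H1 /=.
exact: IH.
Qed.

Lemma cat_split (P1 r1 P2 r2 : seq nat) : P1 ++ r1 = P2 ++ r2 -> size P1 < size P2 ->
  exists m, P2 = P1 ++ m /\ r1 = m ++ r2.
Proof.
elim: P1 P2 => [|x P1 IH] [|y P2] //=; first by move=> ->; exists (y :: P2).
case=> -> E; rewrite ltnS => /(IH _ E) [m [-> ->]]; by exists m.
Qed.

Lemma prim_sorted e : is_primitive e <-> sorted (fun x y => x != y) e.
Proof.
case: e => [|x s]; first by split=> // t.
rewrite /is_primitive /=; split.
  move=> H; apply/(pathP 0) => t ts; exact: (H t).
by move/(pathP 0) => H t ts; apply: H.
Qed.

Fixpoint Dall (K : nat) : seq (seq nat) :=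
  match K with
  | 0 => [:: [:: 0]]
  | K'.+1 => Dall K' ++ [seq K'.+1 :: s | s <- [::] :: Dall K']
  end.

Lemma memDall K r : (r \in Dall K) = [&& r != [::], sorted dgt r & head 0 r <= K].
Proof.
elim: K r => [|K IH] r.
  rewrite /= inE; case: r => [//|x [|y s]] /=; rewrite ?leqn0 //.
    by rewrite eqseq_cons andbT.
  by rewrite eqseq_cons /= andbF /dgt; case: x => [|x] /=; rewrite ?andbF.
rewrite /= mem_cat IH inE; apply/idP/idP.
  case/or3P => [/and3P[-> -> H]|/eqP -> /=|]; first by rewrite /= (leq_trans H).
    by [].
  case/mapP => s; rewrite IH => /and3P[]; case: s => //= y s _ P H ->.
  by rewrite /= P leqnn /dgt ltnS H.
case: r => [//|x s] /= /andP[Hs Hx].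
rewrite leq_eqVlt ltnS in Hx; case/orP: Hx => [/eqP Ex|Hx]; last by rewrite Hs Hx.
case: s Hs => [|y s] Hs; first by rewrite Ex eqxx orbT.
apply/or3P; apply: Or33; apply/mapP; exists (y :: s); last by rewrite Ex.
move: Hs => /= /andP[H1 H2].
by rewrite IH /= H2 -ltnS -Ex.
Qed.

Lemma uniqDall K : uniq (Dall K).
Proof.
elim: K => [//|K IH] /=.
rewrite cat_uniq IH /=; apply/and3P; split.
- rewrite negb_or memDall /= leqNgt ltnSn /=.
  by apply/hasPn => r /mapP[s _ ->]; rewrite memDall /= leqNgt ltnSn !andbF.
- apply/mapP => -[s]; rewrite memDall => /and3P[] + _ _ [Es].
  by rewrite -Es.
- by rewrite map_inj_uniq // => a b [].
Qed.

Definition Rt (a K : nat) : seq (seq nat) :=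
  [seq r <- Dall K | (a < head 0 r) && (a <= last 0 r)].

Fixpoint Lall (k : nat) : seq (seq nat) :=
  match k with
  | 0 => [:: [:: 0]]
  | k'.+1 => [seq P ++ r | P <- Lall k', r <- Rt (last 0 P) k'.+1]
  end.

Lemma memRt a K r : r \in Rt a K ->
  [/\ r != [::], sorted dgt r, head 0 r <= K, a < head 0 r & a <= last 0 r].
Proof. by rewrite mem_filter memDall => /andP[/andP[-> ->] /and3P[-> -> ->]]. Qed.

Lemma last_ne (x y : nat) r : r != [::] -> last x r = last y r.
Proof. by case: r. Qed.

Lemma Lall_ne k P : P \in Lall k -> P != [::].
Proof.
case: k => [|k] /=; first by rewrite inE => /eqP ->.
case/allpairsPdep => Q [r [_ /memRt [rn _ _ _ _] ->]].
by case: Q => //; case: r rn.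
Qed.

Lemma Lall_last k P : P \in Lall k -> last 0 P <= k.
Proof.
elim: k P => [|k IH] P /=; first by rewrite inE => /eqP ->.
case/allpairsPdep => Q [r [_ /memRt [rn d hr _ _] ->]].
rewrite last_cat (@last_ne _ 0 r rn).
exact: leq_trans (dec_last_head _ d) hr.
Qed.

Lemma dec_step r j : sorted dgt r -> j.+1 < size r -> nth 0 r j.+1 < nth 0 r j.
Proof.
case: r => [//|x r] /= /(pathP 0) H; rewrite ltnS => /H.
by rewrite /dgt.
Qed.

Lemma asc_cat_ge P s : P != [::] -> asc P <= asc (P ++ s).
Proof.
move=> Pn; case: s => [|y s]; first by rewrite cats0.
by rewrite asc_cat // -addnA leq_addr.
Qed.

Lemma decomp e : 0 < asc e -> exists P r, [/\ e = P ++ r, P != [::], r != [::],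
  last 0 P < head 0 r & asc r = 0].
Proof.
elim: e => [//|x s IH]; rewrite asc_cons.
case: (posnP (asc s)) => [A0|Apos].
  rewrite A0 addn0 lt0b => /andP[s0 xs].
  exists [:: x], s; split => //; by case: s s0 {IH A0 xs}.
move=> _; have [P [r [-> Pn rn Plr Ar]]] := IH Apos.
exists (x :: P), r; split => //.
by rewrite /= (@last_ne _ 0 P Pn).
Qed.

Lemma PA_cat k P r : in_PA120 k (last 0 P) P -> sorted dgt r -> r != [::] ->
  last 0 P < head 0 r -> head 0 r <= k.+1 -> last 0 P <= last 0 r ->
  in_PA120 k.+1 (last 0 (P ++ r)) (P ++ r).
Proof.
move=> [sP0 [[inv ascc] [prim [av [ascP _]]]]] d rn ab hk alr.
have Pn : P != [::] by case: P sP0 {inv ascc prim av ascP ab alr}.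
set n := size P.
have hsz : k < n by have := asc_le P; rewrite ascP /n; case: (size P) sP0.
have rb : forall j, j < size r -> last 0 P <= nth 0 r j <= k.+1.
  move=> j jr; have /andP[h1 h2] := dec_nth r j d jr.
  by rewrite (leq_trans alr h1) (leq_trans h2 hk).
have ascE : asc (P ++ r) = k.+1 by rewrite asc_cat // ascP ab dec_asc0 // addn0 addn1.
have naE : nth 0 P n.-1 = last 0 P by rewrite nth_last.
split; first by rewrite size_cat; lia.
split; [split|split; [|split; [|split=> //]]].
- move=> t; rewrite size_cat nth_cat -/n; case: (ltnP t n) => tn tlt; first exact: inv.
  have := rb (t - n); move=> /(_ ltac:(lia)) /andP[_ h]; lia.
- move=> t /andP[t0]; rewrite size_cat nth_cat take_cat -/n; case: (ltnP t n) => tn tlt.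
    by apply: ascc; rewrite t0.
  have := rb (t - n); move=> /(_ ltac:(lia)) /andP[_ h].
  have h2 := asc_cat_ge P (take (t - n) r) Pn; rewrite ascP in h2.
  by rewrite addn1; apply: leq_trans h _; rewrite ltnS.
- apply/prim_sorted; move/prim_sorted: prim.
  case: P Pn ab {inv ascc av ascP alr sP0 n hsz rb ascE naE} => [//|x P] _ /= ab.
  rewrite cat_path => -> /=.
  case: r rn d ab {hk} => [//|y r] _ /= d ab.
  rewrite neq_ltn ab /=; apply: sub_path d => u v /=; rewrite /dgt => h.
  by rewrite neq_ltn h orbT.
- move=> u v u0 uv; rewrite size_cat => vlt.
  rewrite !nth_cat -/n.
  case: (ltnP v n) => vn.
    have un : u < n by lia.
    have un1 : u.-1 < n by lia.
    rewrite un un1; exact: av.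
  have := rb (v - n); move=> /(_ ltac:(lia)) /andP[hv _].
  case: (ltnP u n) => un.
    have un1 : u.-1 < n by lia.
    rewrite un1.
    case: (ltnP u.+1 n) => un2.
      have := av u n.-1 u0 ltac:(lia) ltac:(lia); rewrite naE => h.
      case/andP => h1 h2; apply: h; lia.
    have uE : u = n.-1 by lia.
    rewrite uE naE in u0 *; lia.
  case: (ltnP n u) => un2.
    have un1 : (u.-1 < n) = false by lia.
    rewrite un1.
    have := dec_step r (u.-1 - n) d ltac:(lia).
    have -> : (u.-1 - n).+1 = u - n by lia.
    lia.
  have uE : u = n by lia.
  have -> : (u.-1 < n) = true by lia.
  rewrite uE -naE in hv *; lia.
Qed.

Lemma PA_split k i e : in_PA120 k.+1 i e -> exists P r,
  [/\ e = P ++ r, in_PA120 k (last 0 P) P & r \in Rt (last 0 P) k.+1].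
Proof.
move=> [se0 [[inv ascc] [prim [av [asce laste]]]]].
have [P [r [eE Pn rn ab ar0]]] : exists P r, [/\ e = P ++ r, P != [::], r != [::],
  last 0 P < head 0 r & asc r = 0] by apply: decomp; rewrite asce.
subst e.
move/prim_sorted: (prim) => /cat_sorted2 [pP pr].
have d : sorted dgt r by apply: dec_prim_asc0.
have ascP : asc P = k by move: asce; rewrite asc_cat // ab ar0 addn0 addn1 => [[]].
set n := size P.
have n0 : 0 < n by rewrite /n; case: (P) Pn.
have r0 : 0 < size r by case: (r) rn.
have naE : nth 0 P n.-1 = last 0 P by rewrite nth_last.
exists P, r; split => //.
  split => //; split; [split|split; [|split => //]].
  - move=> t tn; have := inv t; rewrite nth_cat size_cat -/n tn; apply; lia.
  - move=> t /andP[t0 tn]; have := ascc t; rewrite nth_cat take_cat size_cat -/n tn.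
    apply; rewrite t0 /=; lia.
  - by apply/prim_sorted.
  - move=> u v u0 uv vn; have := av u v u0 uv; rewrite size_cat !nth_cat -/n.
    have -> : u < n by lia.
    have -> : u.-1 < n by lia.
    rewrite vn; apply; lia.
rewrite mem_filter memDall rn d ab /=.
have hb : head 0 r <= k.+1.
  have := ascc n; rewrite nth_cat take_cat size_cat -/n ltnn subnn take0 cats0 ascP addn1 nth0.
  by apply; rewrite n0 /=; lia.
rewrite hb andbT.
case: (ltnP 1 (size r)) => r1.
  have := av n (n + (size r).-1) n0 ltac:(lia) ltac:(rewrite size_cat; lia).
  rewrite !nth_cat -/n ltnn subnn.
  have -> : (n + (size r).-1 < n) = false by lia.
  have -> : n.-1 < n by lia.
  rewrite naE nth0.
  have -> : n + (size r).-1 - n = (size r).-1 by lia.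
  rewrite nth_last => h; rewrite leqNgt; apply/negP => h2; apply: h.
  by rewrite h2 ab.
case: r rn d ab r1 {prim pr ar0 asce ascc inv av laste hb r0 se0} => [//|y [|z r]] //= _ _ ab _.
exact: ltnW.
Qed.

Lemma PA0 i e : in_PA120 0 i e -> e = [:: 0].
Proof.
move=> [se0 [[inv ascc] [prim [av [asce laste]]]]].
case: e se0 inv prim asce {ascc av laste} => [//|x s] _ inv prim asce.
have x0 : x = 0 by have := inv 0 isT; rewrite /=; lia.
subst x; case: s prim asce {inv} => [//|y s] prim.
rewrite asc_cons /=; case: y prim => [|y] prim //.
by have := prim 0 isT.
Qed.

Lemma memLall k e : e \in Lall k <-> in_PA120 k (last 0 e) e.
Proof.
elim: k e => [|k IH] e.
  split; last by move/PA0 ->; rewrite inE.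
  rewrite inE => /eqP ->; split => //; split; [split|split; [|split=> //]].
  - by case.
  - by move=> [|[|t]] //= /andP[].
  - by move=> [].
  - by move=> [|a] [|[|b]].
split.
  case/allpairsPdep => P [r [PL /memRt [rn d hk ab alr] ->]].
  by apply: PA_cat => //; apply/IH.
move/PA_split => [P [r [-> PP rR]]].
apply/allpairsPdep; exists P, r; split => //; exact/IH.
Qed.

Lemma inj_aux (P1 r1 P2 r2 : seq nat) : P1 ++ r1 = P2 ++ r2 -> size P1 < size P2 ->
  sorted dgt r1 -> r2 != [::] -> last 0 P2 < head 0 r2 -> False.
Proof.
move=> E lt d1 rn2 ab.
have [m [E2 E1]] := cat_split _ _ _ _ E lt.
have mn : m != [::] by move: lt; rewrite E2 size_cat; case: (m) => //; rewrite addn0 ltnn.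
have := dec_asc0 _ d1; rewrite E1 asc_cat //.
rewrite E2 last_cat (@last_ne _ 0 m mn) in ab.
by rewrite ab; lia.
Qed.

Lemma uniqLall k : uniq (Lall k).
Proof.
elim: k => [//|k IH] /=.
apply: allpairs_uniq_dep => //.
  by move=> P _; rewrite filter_uniq // uniqDall.
move=> p1 p2 /allpairsPdep [P1 [r1 [H1 R1 ->]]] /allpairsPdep [P2 [r2 [H2 R2 ->]]] /= E.
have [rn1 d1 _ ab1 _] := memRt _ _ _ R1.
have [rn2 d2 _ ab2 _] := memRt _ _ _ R2.
case: (ltngtP (size P1) (size P2)) => c.
- by case: (inj_aux _ _ _ _ E c d1 rn2 ab2).
- by case: (inj_aux _ _ _ _ (esym E) c d2 rn1 ab1).
- by move/eqP: E; rewrite eqseq_cat // => /andP[/eqP -> /eqP ->].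
Qed.
Local Open Scope ring_scope.

Local Notation y := (1 + 'X : {poly int}).

Lemma wt_cat P r : P != [::] -> sorted dgt r -> r != [::] -> (last 0 P < head 0 r)%N ->
  wt (P ++ r) = wt P * 'X ^+ (size r).-1.
Proof.
move=> Pn d rn ab; rewrite /wt !nontails_des des_cat // (dec_des r d).
by rewrite ltnNge (ltnW ab) addn0 exprD.
Qed.

Lemma sumDallS K (F : seq nat -> {poly int}) :
  \sum_(s <- Dall K.+1) F s =
  \sum_(s <- Dall K) F s + F [:: K.+1] + \sum_(s <- Dall K) F (K.+1 :: s).
Proof. by rewrite /= big_cat /= big_cons big_map addrA. Qed.

Definition Hs K i := \sum_(r <- Dall K) (if last 0 r == i then 'X ^+ (size r).-1 else 0 : {poly int}).

Lemma Hs_third K i (c : bool) :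
  \sum_(s <- Dall K) (if c && (last 0 (K.+1 :: s) == i) then 'X ^+ (size (K.+1 :: s)).-1 else 0 : {poly int})
  = if c then 'X * Hs K i else 0.
Proof.
case: c; last by rewrite big1.
rewrite /Hs mulr_sumr big_seq [RHS]big_seq; apply: eq_bigr => s.
rewrite memDall => /and3P[sn _ _] /=.
rewrite (@last_ne _ 0 s sn); case: ifP => _; last by rewrite mulr0.
by rewrite -exprS prednK //; case: (s) sn.
Qed.

Lemma Hs_val K i : Hs K i = if (i <= K)%N then y ^+ (K - i) else 0.
Proof.
elim: K => [|K IH].
  by rewrite /Hs /= big_cons big_nil addr0 leqn0 eq_sym; case: ifP.
rewrite /Hs sumDallS -/(Hs K i).
have := Hs_third K i true; rewrite /= => ->.
rewrite IH /=.
case: (ltngtP i K.+1) => c.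
- rewrite ltnS in c; rewrite c subSn // exprS; ring.
- have -> : (i <= K)%N = false by lia.
  by rewrite mulr0 !addr0.
- by rewrite c ltnn subnn expr0 mulr0 !addr0 add0r.
Qed.

Definition Ss a K i := \sum_(r <- Rt a K) (if last 0 r == i then 'X ^+ (size r).-1 else 0 : {poly int}).

Lemma Ss_val a K i : Ss a K i = if (a <= i <= K)%N then y ^+ (K - i) - (a == i)%:R else 0.
Proof.
rewrite /Ss /Rt big_filter big_mkcond /=.
elim: K => [|K IH].
  rewrite /= big_cons big_nil /= addr0.
  case: ifP => // /andP[ai]; rewrite leqn0 => /eqP i0; subst.
  have -> : a = 0%N by lia.
  by rewrite eqxx expr0 subrr.
rewrite sumDallS IH.
rewrite (eq_bigr (fun s => if ((a < K.+1) && (a <= i))%N && (last 0 (K.+1 :: s) == i)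
   then 'X ^+ (size (K.+1 :: s)).-1 else 0)); last first.
  move=> s _; case: eqP => [->|_]; first by rewrite andbT.
  by rewrite andbF if_same.
rewrite Hs_third Hs_val /=.
case: (leqP a i) => ai; last first.
  rewrite andbF /=; case: eqP => [E|_]; last by rewrite !if_same !addr0.
  have -> : (a < K.+1)%N = false by lia.
  by rewrite !addr0.
rewrite /=.
case: (ltngtP i K.+1) => c.
- rewrite ltnS in c; rewrite c.
  have -> : (a < K.+1)%N by lia.
  rewrite if_same /= addr0 subSn // exprS; ring.
- have -> : (i <= K)%N = false by lia.
  by rewrite !if_same mulr0 if_same !addr0.
- subst i; rewrite ltnn subnn expr0 /= expr0 mulr0 if_same add0r addr0.
  case: (ltnP a K.+1) => aK.
    rewrite (ltnW aK) /=.
    have -> : (a == K.+1) = false by lia.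
    by rewrite subr0.
  have -> : a = K.+1 by lia.
  by rewrite /= eqxx subrr.
Qed.

Definition Fs k i := \sum_(e <- Lall k | last 0 e == i) wt e.

Lemma Fs_step k i : Fs k.+1 i = \sum_(P <- Lall k) wt P * Ss (last 0 P) k.+1 i.
Proof.
rewrite /Fs big_mkcond /= big_allpairs_dep big_seq [RHS]big_seq.
apply: eq_bigr => P PL; rewrite /Ss mulr_sumr big_seq [RHS]big_seq.
apply: eq_bigr => r Rr; have [rn d _ ab _] := memRt _ _ _ Rr.
rewrite last_cat (@last_ne _ 0 r rn) wt_cat //; last exact: Lall_ne PL.
by case: eqP => _; rewrite ?mulr0.
Qed.

Lemma regroup (s : seq (seq nat)) (f : seq nat -> {poly int}) (c : nat -> {poly int}) i :
  (forall a, (i < a)%N -> c a = 0) ->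
  \sum_(P <- s) f P * c (last 0 P) = \sum_(0 <= a < i.+1) c a * \sum_(P <- s | last 0 P == a) f P.
Proof.
move=> c0.
under [RHS]eq_bigr do rewrite big_mkcond mulr_sumr.
rewrite exchange_big /=; apply: eq_bigr => P _.
case: (leqP (last 0 P) i) => h.
  have m : last 0 P \in index_iota 0 i.+1 by rewrite mem_index_iota ltnS h.
  have u : uniq (index_iota 0 i.+1) by rewrite /index_iota iota_uniq.
  rewrite (bigD1_seq _ m u) /=.
  rewrite eqxx big1 ?addr0; first by rewrite mulrC.
  move=> a /negPf; rewrite eq_sym => ->; by rewrite mulr0.
rewrite c0 // mulr0 big1_seq // => a /andP[_]; rewrite mem_index_iota => /andP[_ ha].
case: eqP => E; last by rewrite mulr0.
by move: ha; rewrite -E ltnS leqNgt h.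
Qed.

Lemma sumBelow k i (Fk : nat -> {poly int}) :
  (forall a, Fk a = if (a <= k)%N then y ^+ 'C(a, 2) * \prod_(a.+1 <= l < k.+1) (y ^+ l - 1) else 0) ->
  (i <= k.+1)%N ->
  \sum_(0 <= a < i) Fk a = y ^+ 'C(i, 2) * \prod_(i <= l < k.+1) (y ^+ l - 1).
Proof.
move=> HF; elim: i => [|i IH] ik.
  by rewrite (big_ltn (m := 0)) // expr0 subrr mul0r mulr0 big_geq.
rewrite big_nat_recr //= IH; last by lia.
rewrite HF; have -> : (i <= k)%N by lia.
rewrite (big_ltn (m := i)); last by lia.
rewrite binS bin1 exprD; ring.
Qed.

Lemma Fs_val k i : Fs k i = if (i <= k)%N then y ^+ 'C(i, 2) * \prod_(i.+1 <= l < k.+1) (y ^+ l - 1) else 0.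
Proof.
elim: k i => [|k IH] i.
  rewrite /Fs /= big_cons big_nil addr0 leqn0 eq_sym.
  case: eqP => [->|] //=; rewrite big_geq // /wt /nontails /=.
  by rewrite expr0 mulr1.
rewrite Fs_step.
pose c := fun a => (if (a <= i <= k.+1)%N then y ^+ (k.+1 - i) - (a == i)%:R else 0 : {poly int}).
have -> : \sum_(P <- Lall k) wt P * Ss (last 0 P) k.+1 i = \sum_(P <- Lall k) wt P * c (last 0 P).
  by apply: eq_bigr => P _; rewrite Ss_val.
rewrite (regroup _ _ c i); last by move=> a ai; rewrite /c; have -> : (a <= i)%N = false by lia.
rewrite /c.
case: (leqP i k.+1) => ik; last first.
  rewrite big1 //; last first.
  by move=> a _; rewrite andbF mul0r.
rewrite big_nat_recr //= leqnn eqxx /= -/(Fs k i).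
rewrite (eq_big_nat _ _ (F2 := fun a => y ^+ (k.+1 - i) * Fs k a)); last first.
  move=> a /andP[_ ai]; rewrite (ltnW ai) (ltn_eqF ai) subr0 /=; done.
rewrite -mulr_sumr (sumBelow k i (Fs k) IH ik) IH.
case: (leqP i k) => ik2.
  rewrite (big_ltn (m := i)) ?ltnS //.
  rewrite [in RHS]big_nat_recr ?ltnS //=.
  have E : y ^+ k.+1 = y ^+ (k.+1 - i) * y ^+ i by rewrite -exprD subnK // ltnW.
  rewrite E; ring.
have -> : i = k.+1 by lia.
rewrite mulr0 addr0 subnn expr0 mul1r !big_geq //.
Qed.

Theorem theorem2p3 (k i : nat) : (i <= k)%N ->
  exists L : seq (seq nat),
    uniq L /\ (forall e, e \in L <-> in_PA120 k i e) /\
    \sum_(e <- L) wt e =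
      (1 + 'X) ^+ 'C(i, 2) * \prod_(i.+1 <= l < k.+1) ((1 + 'X) ^+ l - 1).
Proof.
move=> ik; exists [seq e <- Lall k | last 0 e == i]; split; first by rewrite filter_uniq // uniqLall.
split.
  move=> e; rewrite mem_filter; split.
    by case/andP => /eqP <- /memLall.
  move=> H; have [_ [_ [_ [_ [_ Hl]]]]] := H.
  by rewrite Hl eqxx /=; apply/memLall; rewrite Hl.
by rewrite big_filter -/(Fs k i) Fs_val ik.
Qed.
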